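(* Let $\mathcal{F}=\{N_r:r\in\mathbb{N}\}$ be a countable almost disjoint family of infinite subsets of $\mathbb{N}$ and let $(\lambda_{i,j})_{i,j\in\mathbb{N}}$ be a real matrix such that: (i) $\lim_{i\to\infty}\lambda_{i,j}=0$ for every $j\in\mathbb{N}$; (ii) $\sum_{j\in\mathbb{N}}|\lambda_{i,j}|<\infty$ for every $i\in\mathbb{N}$; (iii) $\lim_{i\to\infty}\sum_{j\in\mathbb{N}}\lambda_{i,j}=1$. If $\lim_{i\to\infty}\sum_{j\in N_1\cup\dots\cup N_r}\lambda_{i,j}=0$ for every $r\in\mathbb{N}$, then there exists an infinite set $N'\subset\mathbb{N}$ such that $\mathcal{F}\cup\{N'\}$ is almost disjoint and $\limsup_{i\to\infty}\sum_{j\in N'}\lambda_{i,j}\ge\frac12$.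
   Context: An almost disjoint family is an infinite family of pairwise almost disjoint infinite subsets of $\mathbb{N}$, where two sets are almost disjoint if their intersection is finite. *)

(* Defs.v *)
From Stdlib Require Import Reals ClassicalEpsilon.
From Coquelicot Require Import Coquelicot.
Open Scope R_scope.

Definition infinite_set (A : nat -> Prop) : Prop :=
  forall n : nat, exists m : nat, (n <= m)%nat /\ A m.

Definition almost_disjoint (A B : nat -> Prop) : Prop :=
  exists n : nat, forall m : nat, (n <= m)%nat -> ~ (A m /\ B m).

Definition almost_disjoint_family (N : nat -> nat -> Prop) : Prop :=
  (forall r, infinite_set (N r)) /\
  (forall r s, r <> s -> almost_disjoint (N r) (N s)).

Definition add_member (N' : nat -> Prop) (N : nat -> nat -> Prop) : nat -> nat -> Prop :=
  fun r => match r with O => N' | S r' => N r' end.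

Definition restrict (A : nat -> Prop) (f : nat -> R) (j : nat) : R :=
  if excluded_middle_informative (A j) then f j else 0.

Definition sum_over (lam : nat -> nat -> R) (i : nat) (A : nat -> Prop) : R :=
  Series (restrict A (lam i)).

Definition union_upto (N : nat -> nat -> Prop) (r : nat) : nat -> Prop :=
  fun j => exists k, (k <= r)%nat /\ N k j.

(* Main.v *)
Require Import Defs.
From Stdlib Require Import Reals Lra Lia Arith Classical ClassicalEpsilon.
From Coquelicot Require Import Coquelicot.
Open Scope R_scope.

Fixpoint fsum (a : nat -> R) (n : nat) : R :=
  match n with O => 0 | S m => fsum a m + a m end.

Lemma exs_le (a b : nat -> R) :
  (forall n, Rabs (a n) <= b n) -> ex_series b -> ex_series a.
Proof. intros H Hb. apply (ex_series_le a b); auto. Qed.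

Lemma ex_restrict (A : nat -> Prop) (f : nat -> R) :
  ex_series (fun j => Rabs (f j)) -> ex_series (restrict A f).
Proof.
  intros H.
  apply (exs_le _ (fun j => Rabs (f j))); auto.
  intros n; unfold restrict; destruct excluded_middle_informative; 
  [lra| rewrite Rabs_R0; apply Rabs_pos].
Qed.

Definition trunc (a : nat -> R) (n : nat) (j : nat) : R :=
  if lt_dec j n then a j else 0.

Lemma sum_n_fsum a m : sum_n a m = fsum a (S m).
Proof.
  induction m. rewrite sum_O; simpl; lra.
  rewrite sum_Sn, IHm. reflexivity.
Qed.

Lemma fsum_trunc a n k : fsum (trunc a n) k = fsum a (Nat.min n k).
Proof.
  induction k; simpl. rewrite Nat.min_0_r; reflexivity.
  rewrite IHk. unfold trunc. destruct lt_dec.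
  - replace (Nat.min n (S k)) with (S (Nat.min n k)) by lia. simpl.
    replace (Nat.min n k) with k by lia. reflexivity.
  - replace (Nat.min n (S k)) with (Nat.min n k) by lia. lra.
Qed.

Lemma is_series_trunc a n : is_series (trunc a n) (fsum a n).
Proof.
  change (is_lim_seq (sum_n (trunc a n)) (fsum a n)).
  apply is_lim_seq_ext_loc with (fun _ => fsum a n).
  - exists n. intros m Hm. rewrite sum_n_fsum, fsum_trunc.
    f_equal. lia.
  - apply is_lim_seq_const.
Qed.

Lemma Series_trunc a n : Series (trunc a n) = fsum a n.
Proof. apply is_series_unique, is_series_trunc. Qed.

Lemma fsum_lim a : ex_series a -> is_lim_seq (fsum a) (Series a).
Proof.
  intros H. apply is_lim_seq_incr_1.
  apply is_lim_seq_ext with (sum_n a).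
  intros; apply sum_n_fsum.
  apply Series_correct in H. exact H.
Qed.

Lemma diff_bound (f : nat -> R) (A B : nat -> Prop) (b b' : nat) :
  ex_series (fun j => Rabs (f j)) -> (b <= b')%nat ->
  (forall j, (b <= j < b')%nat -> (A j <-> B j)) ->
  Rabs (Series (restrict A f) - Series (restrict B f)) <=
  Series (fun j => Rabs (f j)) - fsum (fun j => Rabs (f j)) b' + fsum (fun j => Rabs (f j)) b.
Proof.
  intros Hf Hbb HAB.
  set (af := fun j => Rabs (f j)).
  set (g := fun j => af j - trunc af b' j + trunc af b j).
  assert (Et1 : ex_series (trunc af b')) by (eexists; apply is_series_trunc).
  assert (Et2 : ex_series (trunc af b)) by (eexists; apply is_series_trunc).
  assert (Eg1 : ex_series (fun j => af j - trunc af b' j)).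
  { apply (ex_series_minus af (trunc af b')); auto. }
  assert (Eg : ex_series g).
  { apply (ex_series_plus (fun j => af j - trunc af b' j) (trunc af b)); auto. }
  assert (Sg : Series g = Series af - fsum af b' + fsum af b).
  { unfold g. rewrite Series_plus by auto. rewrite Series_minus by auto.
    rewrite !Series_trunc. reflexivity. }
  set (d := fun j => restrict A f j - restrict B f j).
  assert (Hd : forall j, 0 <= Rabs (d j) <= g j).
  { intros j. split. apply Rabs_pos.
    unfold d, g, trunc, af, restrict.
    destruct (lt_dec j b'), (lt_dec j b).
    - destruct excluded_middle_informative, excluded_middle_informative;
      rewrite ?Rminus_0_r, ?Rminus_0_l, ?Rminus_diag, ?Rabs_R0, ?Rabs_Ropp;
      pose proof (Rabs_pos (f j)); lra.
    - assert (Hj : (b <= j < b')%nat) by lia. specialize (HAB j Hj).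
      destruct excluded_middle_informative, excluded_middle_informative;
      try tauto; rewrite ?Rminus_diag, ?Rabs_R0; lra.
    - lia.
    - destruct excluded_middle_informative, excluded_middle_informative;
      rewrite ?Rminus_0_r, ?Rminus_0_l, ?Rminus_diag, ?Rabs_R0, ?Rabs_Ropp;
      pose proof (Rabs_pos (f j)); lra. }
  assert (Ed : ex_series (fun j => Rabs (d j))).
  { apply (exs_le _ g); auto. intros j. rewrite Rabs_Rabsolu. apply Hd. }
  rewrite <- Series_minus by (apply ex_restrict; auto).
  eapply Rle_trans. apply (Series_Rabs d Ed).
  rewrite <- Sg. apply Series_le; auto.
Qed.

Lemma fsum_lim0 (lam : nat -> nat -> R) (Hi : forall j : nat, is_lim_seq (fun i => lam i j) 0) b :
  is_lim_seq (fun i => fsum (fun j => Rabs (lam i j)) b) 0.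
Proof.
  induction b; simpl.
  - apply is_lim_seq_const.
  - replace (Finite 0) with (Finite (0 + 0)) by (f_equal; lra).
    apply is_lim_seq_plus'; auto.
    pose proof (is_lim_seq_abs _ _ (Hi b)) as H. simpl in H.
    rewrite Rabs_R0 in H. exact H.
Qed.

Lemma split_series (f : nat -> R) (A : nat -> Prop) :
  ex_series (fun j => Rabs (f j)) ->
  Series f = Series (restrict A f) + Series (restrict (fun j => ~ A j) f).
Proof.
  intros H. rewrite <- Series_plus by (apply ex_restrict; auto).
  apply Series_ext. intros n. unfold restrict.
  destruct excluded_middle_informative, excluded_middle_informative; tauto || lra.
Qed.

Lemma ev_lt (u : nat -> R) (l : R) (e : R) : 0 < e -> is_lim_seq u l ->
  exists N, forall n, (N <= n)%nat -> Rabs (u n - l) < e.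
Proof.
  intros He H. apply is_lim_seq_spec in H. exact (H (mkposreal e He)).
Qed.

Lemma step (N : nat -> nat -> Prop) (lam : nat -> nat -> R)
  (Hi : forall j : nat, is_lim_seq (fun i => lam i j) 0)
  (Hii : forall i : nat, ex_series (fun j => Rabs (lam i j)))
  (Hiii : is_lim_seq (fun i => Series (lam i)) 1)
  (Hr : forall r : nat, is_lim_seq (fun i => sum_over lam i (union_upto N r)) 0) k b :
  exists p : nat * nat, (k <= fst p)%nat /\ (b < snd p)%nat /\
    sum_over lam (fst p) (fun j => ~ union_upto N k j) > 5/6 /\
    Series (fun j => Rabs (lam (fst p) j)) - fsum (fun j => Rabs (lam (fst p) j)) (snd p)
      + fsum (fun j => Rabs (lam (fst p) j)) b < 1/3.
Proof.
  assert (H1 : is_lim_seq (fun i => sum_over lam i (fun j => ~ union_upto N k j)) 1).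
  { apply is_lim_seq_ext with (fun i => Series (lam i) - sum_over lam i (union_upto N k)).
    intros i. unfold sum_over. rewrite (split_series (lam i) (union_upto N k)) by auto. ring.
    replace (Finite 1) with (Finite (1 - 0)) by (f_equal; lra).
    apply is_lim_seq_minus'; auto. }
  destruct (ev_lt _ _ (1/6) ltac:(lra) H1) as [N1 HN1].
  destruct (ev_lt _ _ (1/6) ltac:(lra) (fsum_lim0 lam Hi b)) as [N2 HN2].
  set (i := (k + N1 + N2)%nat).
  destruct (ev_lt _ _ (1/6) ltac:(lra) (fsum_lim _ (Hii i))) as [N3 HN3].
  exists (i, S (b + N3)). cbn [fst snd]. split; [unfold i; lia|]. split; [lia|].
  specialize (HN1 i ltac:(unfold i; lia)). specialize (HN2 i ltac:(unfold i; lia)).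
  specialize (HN3 (S (b + N3)) ltac:(lia)).
  apply Rabs_def2 in HN1, HN2, HN3. cbv beta in *. split; lra.
Qed.

Lemma abs_le_b (x y : R) : Rabs x <= y -> - y <= x <= y.
Proof. unfold Rabs; destruct Rcase_abs; lra. Qed.

Theorem lemma4p11 (N : nat -> nat -> Prop) (lam : nat -> nat -> R)
  (HF : almost_disjoint_family N)
  (Hi : forall j : nat, is_lim_seq (fun i => lam i j) 0)
  (Hii : forall i : nat, ex_series (fun j => Rabs (lam i j)))
  (Hiii : is_lim_seq (fun i => Series (lam i)) 1)
  (Hr : forall r : nat, is_lim_seq (fun i => sum_over lam i (union_upto N r)) 0) :
  exists N' : nat -> Prop,
    infinite_set N' /\
    almost_disjoint_family (add_member N' N) /\
    Rbar_le (Finite (1 / 2)) (LimSup_seq (fun i => sum_over lam i N')).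
Proof.
  pose proof (step N lam Hi Hii Hiii Hr) as Hs.
  assert (HF' : exists F : nat -> nat -> nat * nat, forall k b,
    (k <= fst (F k b))%nat /\ (b < snd (F k b))%nat /\
    sum_over lam (fst (F k b)) (fun j => ~ union_upto N k j) > 5/6 /\
    Series (fun j => Rabs (lam (fst (F k b)) j)) - fsum (fun j => Rabs (lam (fst (F k b)) j)) (snd (F k b))
      + fsum (fun j => Rabs (lam (fst (F k b)) j)) b < 1/3).
  { exists (fun k b => proj1_sig (constructive_indefinite_description _ (Hs k b))).
    intros k b. apply (proj2_sig (constructive_indefinite_description _ (Hs k b))). }
  clear Hs. destruct HF' as [F HFk].
  set (bs := fix bs k := match k with 0 => 0%nat | S k' => snd (F k' (bs k')) end).
  assert (bsS : forall k, bs (S k) = snd (F k (bs k))) by reflexivity.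
  clearbody bs.
  set (is := fun k => fst (F k (bs k))).
  assert (Hlt : forall k, (bs k < bs (S k))%nat).
  { intros k. rewrite bsS. apply HFk. }
  assert (Hmono : forall k l, (k <= l)%nat -> (bs k <= bs l)%nat).
  { intros k l Hkl. induction Hkl. lia. specialize (Hlt m). lia. }
  assert (Hge : forall k, (k <= bs k)%nat).
  { induction k. lia. specialize (Hlt k). lia. }
  assert (Huniq : forall k k' j, (bs k <= j < bs (S k))%nat -> (bs k' <= j < bs (S k'))%nat -> k = k').
  { intros k k' j H1 H2. destruct (lt_eq_lt_dec k k') as [[H|H]|H]; auto.
    - specialize (Hmono (S k) k' H). lia.
    - specialize (Hmono (S k') k H). lia. }
  set (N' := fun j => exists k, (bs k <= j < bs (S k))%nat /\ ~ union_upto N k j).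
  assert (Hagree : forall k j, (bs k <= j < bs (S k))%nat -> (N' j <-> ~ union_upto N k j)).
  { intros k j Hj. split.
    - intros [k' [Hj' Hn]]. rewrite (Huniq k k' j Hj Hj'). exact Hn.
    - intros Hn. exists k. auto. }
  assert (Hkey : forall k, sum_over lam (is k) N' >= 1/2).
  { intros k. destruct (HFk k (bs k)) as [_ [Hb [H56 H13]]].
    rewrite <- bsS in H13, Hb. fold (is k) in H56, H13.
    pose proof (diff_bound (lam (is k)) N' (fun j => ~ union_upto N k j) (bs k) (bs (S k))
      (Hii _) ltac:(lia) (Hagree k)) as D.
    unfold sum_over in *. apply abs_le_b in D. lra. }
  assert (Hne : forall k, exists j, (bs k <= j < bs (S k))%nat /\ ~ union_upto N k j).
  { intros k. apply NNPP. intros Hc.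
    destruct (HFk k (bs k)) as [_ [Hb [H56 H13]]].
    rewrite <- bsS in H13, Hb. fold (is k) in H56, H13.
    assert (Ag : forall j, (bs k <= j < bs (S k))%nat -> (False <-> ~ union_upto N k j)).
    { intros j Hj. split. tauto. intros Hn. apply Hc. exists j. auto. }
    pose proof (diff_bound (lam (is k)) (fun _ => False) (fun j => ~ union_upto N k j) (bs k) (bs (S k))
      (Hii _) ltac:(lia) Ag) as D.
    assert (Z : Series (restrict (fun _ => False) (lam (is k))) = 0).
    { rewrite (Series_ext _ (trunc (lam (is k)) 0)). apply Series_trunc.
      intros n. unfold restrict, trunc. destruct excluded_middle_informative; [tauto|].
      destruct lt_dec; lia || reflexivity. }
    rewrite Z in D. unfold sum_over in *. apply abs_le_b in D. lra. }
  exists N'.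
  assert (Hinf : infinite_set N').
  { intros n. destruct (Hne n) as [j [Hj Hn]]. exists j. split.
    specialize (Hge n). lia. apply Hagree with n; auto. }
  assert (Had : forall s, almost_disjoint N' (N s)).
  { intros s. exists (bs s). intros m Hm [[k [Hk Hn]] Hs].
    assert (s <= k)%nat.
    { destruct (le_lt_dec s k) as [H|H]; auto. specialize (Hmono (S k) s H). lia. }
    apply Hn. exists s. auto. }
  split; [exact Hinf|]. split.
  - destruct HF as [HF1 HF2]. split.
    + intros [|r]; simpl; auto.
    + intros [|r] [|s] Hrs; simpl.
      * lia.
      * apply Had.
      * destruct (Had r) as [n Hn]. exists n. intros m Hm [H1 H2]. apply (Hn m Hm). tauto.
      * apply HF2. lia.
  - unfold LimSup_seq. destruct (ex_LimSup_seq (fun i => sum_over lam i N')) as [l Hl].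
    simpl. assert (His : forall k, (k <= is k)%nat).
    { intros k. apply HFk. }
    destruct l as [l| |]; simpl in *.
    + destruct (Rle_lt_dec (1/2) l) as [H|H]; auto.
      assert (He : 0 < 1/2 - l) by lra.
      destruct (Hl (mkposreal _ He)) as [_ [M HM]]. simpl in HM.
      specialize (HM (is M) (His M)). specialize (Hkey M). lra.
    + exact I.
    + destruct (Hl (1/2)) as [M HM]. specialize (HM (is M) (His M)). specialize (Hkey M). lra.
Qed.
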